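(* Let $G$ be a finite abelian group, $M$ a finitely generated $\mathbb Z[G]$-module, $H\subseteq G$ a subgroup and $s\ge0$. Then there is an isomorphism of $\mathbb Z[G/H]$-modules \[ \textstyle\bigcap^s_{\mathbb Z[G/H]}(M^{**})^H\xrightarrow{\ \sim\ }\big(\bigcap^s_{\mathbb Z[G]}M\big)^H \] whose base change to $\mathbb Q$ is the map $\nu_H:\mathbb Q\otimes\bigwedge^s_{\mathbb Z[G/H]}M^H\to\mathbb Q\otimes\bigwedge^s_{\mathbb Z[G]}M$ given by $x_1\wedge\cdots\wedge x_s\mapsto|H|^{1-s}x_1\wedge\cdots\wedge x_s$ for $s\ge1$ (equivalently, $\mathrm N_Ha_1\wedge\cdots\wedge\mathrm N_Ha_s\mapsto\mathrm N_H\cdot(a_1\wedge\cdots\wedge a_s)$) and by multiplication by $\mathrm N_H$ for $s=0$.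
   Context: For a commutative ring $R$ and $R$-module $N$, $N^*=\mathrm{Hom}_R(N,R)$ and the $s$-th exterior bidual is $\bigcap^s_RN=(\bigwedge^s_RN^* )^*$. Here $R=\mathbb Z[G]$ or $\mathbb Z[G/H]$; $(M^{**})^H$ is regarded as a $\mathbb Z[G/H]$-module. $\mathrm N_H=\sum_{h\in H}h$. After tensoring with $\mathbb Q$, $\mathbb Q\otimes\bigcap^s_RN$ is identified with $\bigwedge^s_{\mathbb Q\otimes R}(\mathbb Q\otimes N)$ (the group algebras being semisimple), and $\mathbb Q\otimes(M^{**})^H=(\mathbb Q\otimes M)^H$. *)

(* Defs.v *)
From HB Require Import structures.
From mathcomp Require Import all_boot all_order all_algebra all_fingroup.
From mathcomp Require Import boolp classical_sets functions.
Set Implicit Arguments. Unset Strict Implicit. Unset Printing Implicit Defensive.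
Import GRing.Theory.
Local Open Scope ring_scope.

(* The integral group ring Z[T] of a finite group T: finitely supported
   (here: all) functions T -> int, with convolution product. *)
Notation ZG T := {ffun T -> int}.

Definition gone (T : finGroupType) : ZG T := [ffun x => ((x == 1%g) : nat)%:Z].

Definition gmul (T : finGroupType) (a b : ZG T) : ZG T :=
  [ffun x => \sum_(h : T) a h * b (h^-1 * x)%g].

(* multiplication by the basis element g of Z[T] *)
Definition gtrans (T : finGroupType) (g : T) (a : ZG T) : ZG T :=
  [ffun x => a (g^-1 * x)%g].

Definition NHel (T : finGroupType) (H : {set T}) : ZG T :=
  [ffun x => ((x \in H) : nat)%:Z].

Definition gscale (T : finGroupType) (X : zmodType) (act : T -> X -> X)
  (r : ZG T) (x : X) : X := \sum_(g : T) act g x *~ r g.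

(* A Z[T]-module is a zmodType X (or a subset S of it, closed under the
   operations) with a left action act of T by additive maps. *)
Definition fin_gen (T : finGroupType) (X : zmodType) (act : T -> X -> X) :=
  exists gens : seq X, forall x : X,
    exists r : 'I_(size gens) -> ZG T,
      x = \sum_(i < size gens) gscale act (r i) gens`_i.

Definition ZGlin_on (T : finGroupType) (X : zmodType) (act : T -> X -> X)
  (S : X -> Prop) (f : X -> ZG T) :=
  (forall x y, S x -> S y -> f (x + y) = f x + f y) /\
  (forall g x, S x -> f (act g x) = gtrans g (f x)).

(* The dual S^* = Hom_{Z[T]}(S, Z[T]); its elements are represented by
   functions on X vanishing outside S (so Leibniz equality is the right one). *)
Definition dual (T : finGroupType) (X : zmodType) (act : T -> X -> X)
  (S : X -> Prop) : (X -> ZG T) -> Prop :=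
  fun f => ZGlin_on act S f /\ (forall x, ~ S x -> f x = 0).

Definition dual_act (T : finGroupType) (X : Type) (g : T) (f : X -> ZG T)
  : X -> ZG T := fun x => gtrans g (f x).

Definition upd (s : nat) (A : Type) (fs : 'I_s -> A) (i : 'I_s) (a : A) : 'I_s -> A :=
  fun j => if j == i then a else fs j.

(* The s-th exterior bidual  (wedge^s S^* )^* = Hom_{Z[T]}(wedge^s S^*, Z[T]),
   i.e. the alternating Z[T]-multilinear maps (S^* )^s -> Z[T]
   (universal property of the exterior power), represented by functions on
   tuples of X -> Z[T] vanishing outside (S^* )^s. *)
Definition ext_bidual (T : finGroupType) (X : zmodType) (act : T -> X -> X)
  (S : X -> Prop) (s : nat) : (('I_s -> (X -> ZG T)) -> ZG T) -> Prop :=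
  fun F =>
  (forall (fs : 'I_s -> X -> ZG T) (i : 'I_s) (f f' : X -> ZG T),
     (forall k, dual act S (fs k)) -> dual act S f -> dual act S f' ->
     F (upd fs i (f + f')) = F (upd fs i f) + F (upd fs i f')) /\
  (forall (fs : 'I_s -> X -> ZG T) (i : 'I_s) (g : T),
     (forall k, dual act S (fs k)) ->
     F (upd fs i (dual_act g (fs i))) = gtrans g (F fs)) /\
  (forall (fs : 'I_s -> X -> ZG T) (i j : 'I_s),
     (forall k, dual act S (fs k)) -> i != j -> fs i = fs j -> F fs = 0) /\
  (forall (fs : 'I_s -> X -> ZG T), ~ (forall k, dual act S (fs k)) -> F fs = 0).

Definition bid_act (T : finGroupType) (A : Type) (g : T) (F : A -> ZG T)
  : A -> ZG T := fun fs => gtrans g (F fs).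

Definition gdet (T : finGroupType) (s : nat) (A : 'I_s -> 'I_s -> ZG T) : ZG T :=
  \sum_(p : 'S_s)
     (if odd_perm p then - \big[@gmul T/gone T]_(i < s) A i (p i)
      else \big[@gmul T/gone T]_(i < s) A i (p i)).

(* canonical map  wedge^s S -> bidual:  y_1 /\ ... /\ y_s  |->
   ((f_1,...,f_s) |-> det (f_i (y_j))) *)
Definition xi (T : finGroupType) (X : zmodType) (act : T -> X -> X)
  (S : X -> Prop) (s : nat) (y : 'I_s -> X) : ('I_s -> (X -> ZG T)) -> ZG T :=
  fun fs => if `[< forall k, dual act S (fs k) >]
            then gdet (fun i j => fs i (y j)) else 0.

Definition invar (T : finGroupType) (X : Type) (act : T -> X -> X)
  (S : X -> Prop) (H : {set T}) : X -> Prop :=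
  fun x => S x /\ (forall h, h \in H -> act h x = x).

Definition normH (T : finGroupType) (X : zmodType) (act : T -> X -> X)
  (H : {set T}) (x : X) : X := \sum_(h in H) act h x.

Definition bidual_set (T : finGroupType) (X : zmodType) (act : T -> X -> X)
  : ((X -> ZG T) -> ZG T) -> Prop :=
  dual (@dual_act T X) (dual act (fun _ => True)).

Definition evb (T : finGroupType) (X : zmodType) (act : T -> X -> X) (x : X)
  : (X -> ZG T) -> ZG T :=
  fun f => if `[< dual act (fun _ => True) f >] then f x else 0.

(* action of G/H (= coset_of H) on an H-invariant element via a representative *)
Definition cqact (gT : finGroupType) (H : {group gT}) (A : Type)
  (act : gT -> A -> A) (c : coset_of H) (a : A) : A :=
  act (repr (c : {set gT})) a.

Definition ZGiso (T : finGroupType) (X Y : zmodType)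
  (actX : T -> X -> X) (SX : X -> Prop) (actY : T -> Y -> Y) (SY : Y -> Prop)
  (Phi : X -> Y) :=
  (forall x, SX x -> SY (Phi x)) /\
  (forall x y, SX x -> SX y -> Phi (x + y) = Phi x + Phi y) /\
  (forall g x, SX x -> Phi (actX g x) = actY g (Phi x)) /\
  (forall x y, SX x -> SX y -> Phi x = Phi y -> x = y) /\
  (forall y, SY y -> exists2 x, SX x & Phi x = y).

Arguments ext_bidual {T X} act S s _.

(* Main.v *)
Require Import Defs.
From HB Require Import structures.
From mathcomp Require Import all_boot all_order all_algebra all_fingroup.
From mathcomp Require Import boolp classical_sets functions.
From mathcomp Require Import zify.
Import GRing.Theory Num.Theory.
Local Open Scope ring_scope.
Set Implicit Arguments. Unset Strict Implicit. Unset Printing Implicit Defensive.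

Lemma clear_den (J : finType) (a : J -> rat) :
  exists c : nat, exists z : J -> int, (0 < c)%N /\ forall j, a j * c%:R = (z j)%:~R.
Proof.
exists (\prod_j `|denq (a j)|%N).
exists (fun j => numq (a j) * (\prod_(i | i != j) `|denq (a i)|%N)%:Z); split.
  by rewrite prodn_gt0 // => j; rewrite absz_gt0 denq_eq0.
move=> j; rewrite (bigD1 j) //= natrM.
have -> : (`|denq (a j)|%N)%:R = (denq (a j))%:~R :> rat by rewrite -absz_denq.
rewrite mulrA -numqE.
by rewrite rmorphM.
Qed.

Section LatticeBasis.
Variables (V : Type) (P : V -> Prop) (I : finType) (co : V -> I -> int).

Definition comx t (bs : 'I_t -> V) : 'M[rat]_(t, #|I|) :=
  \matrix_(l, k) ((co (bs l) (enum_val k))%:~R).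

Definition corow (v : V) : 'rV[rat]_#|I| := \row_k ((co v (enum_val k))%:~R).

Definition LBgood t (bs : 'I_t -> V) :=
  forall v, P v -> exists c : nat, exists z : 'I_t -> int,
    (0 < c)%N /\ forall i, co v i *+ c = \sum_l z l * co (bs l) i.

Lemma inspan_good t (bs : 'I_t -> V) :
  (forall v, P v -> (corow v <= comx bs)%MS) -> LBgood bs.
Proof.
move=> H v Pv; have /submxP[D eD] := H v Pv.
have [c [z [c0 zE]]] := clear_den (fun l : 'I_t => D 0 l).
exists c, z; split => // i.
apply: (@intr_inj rat); rewrite rmorphMn rmorph_sum /=.
have := congr1 (fun M : 'rV[rat]_#|I| => M 0 (enum_rank i)) eD.
rewrite /corow mxE enum_rankK => ->; rewrite mxE -mulr_natr mulr_suml.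
apply: eq_bigr => l _; rewrite /comx mxE enum_rankK mulrAC zE rmorphM.
by [].
Qed.

Lemma extend_free t (bs : 'I_t -> V) v :
  row_free (comx bs) -> ~~ (corow v <= comx bs)%MS ->
  row_free (comx (fun l : 'I_(t + 1) =>
                   match fintype.split l with inl l' => bs l' | inr _ => v end)).
Proof.
move=> fr nsub.
have -> : comx (fun l : 'I_(t + 1) =>
                   match fintype.split l with inl l' => bs l' | inr _ => v end)
          = col_mx (comx bs) (corow v).
  apply/matrixP => i j; rewrite -(splitK i).
  case: (fintype.split i) => k /=.
    by rewrite col_mxEu /comx !mxE (unsplitK (inl _ k)).
  by rewrite col_mxEd /comx /corow !mxE (unsplitK (inr _ k)).
rewrite /row_free; apply/eqP/anti_leq; rewrite rank_leq_row /=.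
have [le eq] := mxrank_leqif_sup (addsmxSl (comx bs) (corow v)).
have lt : (\rank (comx bs) < \rank (comx bs + corow v))%N.
  rewrite ltn_neqAle le andbT eq; apply: contra nsub => sub.
  exact: submx_trans (addsmxSr _ _) sub.
by move: lt; rewrite (eqP fr) addsmxE => lt; rewrite -[X in (X <= _)%N]addn1 in lt.
Qed.

Lemma lattice_basis_aux n : forall t (bs : 'I_t -> V),
  (#|I| - t < n)%N -> (forall l, P (bs l)) -> row_free (comx bs) ->
  exists t' (bs' : 'I_t' -> V),
    [/\ (forall l, P (bs' l)), row_free (comx bs') & LBgood bs'].
Proof.
elim: n => // n IH t bs lt Pbs fr.
case: (pselect (forall v, P v -> (corow v <= comx bs)%MS)) => [all|].
  by exists t, bs; split => //; exact: inspan_good.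
move=> /existsNP[v /not_implyP[Pv nsub]].
have fr' := extend_free fr (introN idP nsub).
apply: (IH _ _ _ _ fr').
  have := rank_leq_col (comx (fun l : 'I_(t + 1) =>
                   match fintype.split l with inl l' => bs l' | inr _ => v end)).
  move/eqP: fr' => ->; rewrite addn1 => tI.
  by move: lt; lia.
by move=> l; case: splitP.
Qed.

Lemma lattice_basis : exists t (bs : 'I_t -> V),
    [/\ (forall l, P (bs l)), row_free (comx bs) & LBgood bs].
Proof.
apply: (@lattice_basis_aux (#|I|.+1) 0 (fun l => match l with Ordinal _ p => False_rect _ (notF p) end)).
- by rewrite subn0.
- by case.
- by rewrite /row_free; apply/eqP; apply/eqP; rewrite -leqn0 rank_leq_row.
Qed.

Lemma lattice_solve t (bs : 'I_t -> V) : row_free (comx bs) ->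
  forall y : 'I_t -> int, exists k : nat, exists w : I -> int,
    (0 < k)%N /\ forall l, \sum_i co (bs l) i * w i = y l *+ k.
Proof.
move=> /row_freeP[B eB] y.
pose w' : 'cV[rat]_#|I| := B *m \col_l ((y l)%:~R).
have ew l : \sum_k comx bs l k * w' k 0 = (y l)%:~R.
  have := congr1 (fun M : 'cV[rat]_t => M l 0) (congr1 (mulmx^~ (\col_l ((y l)%:~R : rat))) eB).
  rewrite /= mul1mx -mulmxA mxE /w' => <-; by rewrite [RHS]mxE.
have [c [w [c0 wE]]] := clear_den (fun i : I => w' (enum_rank i) 0).
exists c, w; split => // l.
apply: (@intr_inj rat); rewrite rmorphMn rmorph_sum /= -ew -mulr_natr mulr_suml.
rewrite (reindex (enum_val : 'I_#|I| -> I)) /=; last first.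
  by exists enum_rank => x _; rewrite ?enum_valK ?enum_rankK.
apply: eq_bigr => k _; rewrite intrM -wE enum_valK /comx mxE mulrA.
by rewrite mxE.
Qed.

End LatticeBasis.

Section GT.
Variable T : finGroupType.
Implicit Types (a b : ZG T) (g h : T).

Lemma gtransD g a b : gtrans g (a + b) = gtrans g a + gtrans g b.
Proof. by apply/ffunP => x; rewrite !ffunE. Qed.
Lemma gtrans0 g : gtrans g 0 = 0.
Proof. by apply/ffunP => x; rewrite !ffunE. Qed.
Lemma gtransN g a : gtrans g (- a) = - gtrans g a.
Proof. by apply/ffunP => x; rewrite !ffunE. Qed.
Lemma gtransB g a b : gtrans g (a - b) = gtrans g a - gtrans g b.
Proof. by rewrite gtransD gtransN. Qed.
Lemma gtransMn g a n : gtrans g (a *+ n) = gtrans g a *+ n.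
Proof. by apply/ffunP => x; rewrite !ffunE !ffunMnE ffunE. Qed.
Lemma gtransMz g a z : gtrans g (a *~ z) = gtrans g a *~ z.
Proof. by apply/ffunP => x; rewrite !ffunE !ffunMzE ffunE. Qed.
Lemma gtrans_sum g (I : Type) (r : seq I) (P : pred I) (F : I -> ZG T) :
  gtrans g (\sum_(i <- r | P i) F i) = \sum_(i <- r | P i) gtrans g (F i).
Proof. exact: (big_morph _ (gtransD g) (gtrans0 g)). Qed.
Lemma gtransM g h a : gtrans (g * h) a = gtrans g (gtrans h a).
Proof. by apply/ffunP => x; rewrite !ffunE invMg mulgA. Qed.
Lemma gtrans1 a : gtrans 1 a = a.
Proof. by apply/ffunP => x; rewrite !ffunE invg1 mul1g. Qed.
Lemma gtransK g a : gtrans g^-1 (gtrans g a) = a.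
Proof. by rewrite -gtransM mulVg gtrans1. Qed.
Lemma gtransE g a x : gtrans g a x = a (g^-1 * x)%g.
Proof. by rewrite ffunE. Qed.

Lemma gtrans_inj g : injective (gtrans g).
Proof. by move=> a b e; rewrite -(gtransK g a) e gtransK. Qed.

Lemma ZG_mulIn (n : nat) a b : (0 < n)%N -> a *+ n = b *+ n -> a = b.
Proof.
move=> n0 e; apply/ffunP => x; have := congr1 (fun f : ZG T => f x) e.
rewrite /= !ffunMnE => /eqP; rewrite -subr_eq0 -mulrnBl mulrn_eq0.
by rewrite (negbTE (lt0n_neq0 n0)) ?orbF ?orFb subr_eq0 => /eqP.
Qed.

Lemma ZG_mul0n (n : nat) a : (0 < n)%N -> a *+ n = 0 -> a = 0.
Proof. by move=> n0 e; apply: (ZG_mulIn n0); rewrite mul0rn. Qed.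

Lemma gmul_sumr_gtrans (A : {set T}) r :
  gmul (NHel A) r = \sum_(h in A) gtrans h r.
Proof.
apply/ffunP => x; rewrite !ffunE sum_ffunE [RHS]big_mkcond /=.
by apply: eq_bigr => h _; rewrite !ffunE; case: (h \in A); rewrite ?mul1r ?mul0r.
Qed.

Lemma gmul0r a : gmul a 0 = 0.
Proof. by apply/ffunP => x; rewrite !ffunE big1 // => h _; rewrite ffunE mulr0. Qed.

End GT.

Section Cosets.
Variables (gT : finGroupType) (H : {group gT}).
Hypothesis nH : forall x : gT, x \in ('N(H))%g.

Definition iota (u : ZG (coset_of H)) : ZG gT := [ffun x => u (coset H x)].
Definition iinv (y : ZG gT) : ZG (coset_of H) := [ffun c : coset_of H => y (repr (c : {set gT}))].
Definition pi (r : ZG gT) : ZG (coset_of H) :=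
  [ffun c : coset_of H => \sum_(x | coset H x == c) r x].
Definition Hinv (y : ZG gT) := forall h, h \in H -> gtrans h y = y.

Lemma cosetMx x y : coset H (x * y)%g = (coset H x * coset H y)%g.
Proof. by rewrite morphM. Qed.
Lemma cosetVx x : coset H x^-1%g = (coset H x)^-1%g.
Proof. by rewrite morphV. Qed.
Lemma cosetH h : h \in H -> coset H h = 1%g.
Proof. exact: coset_id. Qed.

Lemma coset_eqP x y : reflect (coset H x = coset H y) ((x * y^-1)%g \in H).
Proof.
apply: (iffP idP) => [xyH|e].
  by rewrite -(mulgKV y x) cosetMx (cosetH xyH) mul1g.
by apply: coset_idr => //; rewrite cosetMx cosetVx e mulgV.
Qed.

Lemma Hinv_coset y x x' : Hinv y -> coset H x = coset H x' -> y x = y x'.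
Proof.
move=> hy /coset_eqP xx.
have := congr1 (fun f : ZG gT => f x) (hy _ xx).
by rewrite ffunE invMg invgK mulgKV => ->.
Qed.

Lemma iota_Hinv u : Hinv (iota u).
Proof.
move=> h hH; apply/ffunP => x; rewrite !ffunE cosetMx cosetVx.
by rewrite (cosetH hH) invg1 mul1g.
Qed.

Lemma iotaK u : iinv (iota u) = u.
Proof. by apply/ffunP => c; rewrite !ffunE coset_reprK. Qed.

Lemma iinvK y : Hinv y -> iota (iinv y) = y.
Proof.
move=> hy; apply/ffunP => x; rewrite !ffunE; apply: Hinv_coset => //.
by rewrite coset_reprK.
Qed.

Lemma iota_inj : injective iota.
Proof. by move=> u v e; rewrite -(iotaK u) e iotaK. Qed.

Lemma iota_gtrans g u : iota (gtrans (coset H g) u) = gtrans g (iota u).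
Proof. by apply/ffunP => x; rewrite !ffunE cosetMx cosetVx. Qed.

Lemma iinv_gtrans g y : Hinv y -> iinv (gtrans g y) = gtrans (coset H g) (iinv y).
Proof.
move=> hy; apply/ffunP => c; rewrite !ffunE; apply: Hinv_coset => //.
by rewrite cosetMx cosetVx !coset_reprK.
Qed.

Lemma iotaD u v : iota (u + v) = iota u + iota v.
Proof. by apply/ffunP => x; rewrite !ffunE. Qed.
Lemma iota0 : iota 0 = 0.
Proof. by apply/ffunP => x; rewrite !ffunE. Qed.
Lemma iotaN u : iota (- u) = - iota u.
Proof. by apply/ffunP => x; rewrite !ffunE. Qed.
Lemma iotaMn u n : iota (u *+ n) = iota u *+ n.
Proof. by apply/ffunP => x; rewrite !ffunE !ffunMnE ffunE. Qed.
Lemma iinvD y z : iinv (y + z) = iinv y + iinv z.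
Proof. by apply/ffunP => x; rewrite !ffunE. Qed.
Lemma iinv0 : iinv 0 = 0.
Proof. by apply/ffunP => x; rewrite !ffunE. Qed.
Lemma iinvN y : iinv (- y) = - iinv y.
Proof. by apply/ffunP => x; rewrite !ffunE. Qed.
Lemma iinvMn y n : iinv (y *+ n) = iinv y *+ n.
Proof. by apply/ffunP => x; rewrite !ffunE !ffunMnE ffunE. Qed.

Lemma piD a b : pi (a + b) = pi a + pi b.
Proof. by apply/ffunP => c; rewrite !ffunE -big_split; apply: eq_bigr => x _; rewrite ffunE. Qed.
Lemma pi0 : pi 0 = 0.
Proof. by apply/ffunP => c; rewrite !ffunE big1 // => x _; rewrite ffunE. Qed.
Lemma piN a : pi (- a) = - pi a.
Proof.
apply/ffunP => c; rewrite !ffunE -sumrN.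
by apply: eq_bigr => x _; rewrite ffunE.
Qed.

Lemma mulg_coset_eq (c d z : coset_of H) : ((d * z)%g == c) = (z == (d^-1 * c)%g).
Proof.
by rewrite -(inj_eq (mulgI d^-1%g)) mulKg.
Qed.

Lemma pi_gmul a b : pi (gmul a b) = gmul (pi a) (pi b).
Proof.
apply/ffunP => c; rewrite !ffunE.
under eq_bigr => x _ do rewrite ffunE.
rewrite exchange_big /=.
under eq_bigr => h _ do rewrite -mulr_sumr.
under [RHS]eq_bigr => d _ do rewrite !ffunE mulr_suml.
rewrite [LHS](partition_big (coset H) predT) //=.
apply: eq_bigr => d _; apply: eq_bigr => h /eqP hd.
congr (_ * _).
rewrite (reindex (fun y => h * y)%g) /=; last first.
  by exists (fun x => h^-1 * x)%g => y _; rewrite ?mulKg ?mulKVg.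
apply: eq_big => [y|y _]; first by rewrite cosetMx hd mulg_coset_eq.
by rewrite mulKg.
Qed.

Lemma pi_gone : pi (gone gT) = gone (coset_of H).
Proof.
apply/ffunP => c; rewrite /gone !ffunE big_mkcond (bigD1 1%g) //= big1 => [|x nx1].
  by rewrite ffunE eqxx morph1 addr0 eq_sym; case: (c == 1%g).
by rewrite ffunE (negbTE nx1); case: ifP.
Qed.

Lemma pi_sum (I : Type) (r : seq I) (P : pred I) (F : I -> ZG gT) :
  pi (\sum_(i <- r | P i) F i) = \sum_(i <- r | P i) pi (F i).
Proof. exact: (big_morph _ piD pi0). Qed.

Lemma pi_prod (I : Type) (r : seq I) (P : pred I) (F : I -> ZG gT) :
  pi (\big[@gmul gT/gone gT]_(i <- r | P i) F i) =
  \big[@gmul _/gone _]_(i <- r | P i) pi (F i).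
Proof. exact: (big_morph _ pi_gmul pi_gone). Qed.

Lemma pi_gdet s (A : 'I_s -> 'I_s -> ZG gT) :
  pi (gdet A) = gdet (fun i j => pi (A i j)).
Proof.
rewrite /gdet pi_sum; apply: eq_bigr => p _.
by case: (odd_perm p); rewrite ?piN pi_prod.
Qed.

Lemma iota_pi r : iota (pi r) = gmul (NHel H) r.
Proof.
apply/ffunP => x; rewrite !ffunE.
rewrite [RHS](reindex (fun y => x * y^-1)%g) /=; last first.
  by exists (fun h => h^-1 * x)%g => y _; rewrite ?invMg ?invgK ?mulgKV ?mulKVg.
rewrite big_mkcond; apply: eq_bigr => y _.
rewrite !ffunE invMg invgK mulgKV.
case: (boolP ((x * y^-1)%g \in H)) => [/coset_eqP e|n]; first by rewrite e eqxx mul1r.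
rewrite mul0r; case: eqP => // e; case/negP: n; apply/coset_eqP; by rewrite e.
Qed.

End Cosets.

Lemma fct_mulz (U : Type) (K : zmodType) (f : U -> K) z x : (f *~ z) x = f x *~ z.
Proof. by case: z => n; rewrite /intmul ?opprfctE natmulfctE. Qed.

Lemma fct_sum (U : Type) (K : zmodType) (J : Type) (r : seq J) (P : pred J)
  (F : J -> U -> K) x : (\sum_(i <- r | P i) F i) x = \sum_(i <- r | P i) F i x.
Proof. by rewrite fct_sumE. Qed.

Lemma fctD (U : Type) (K : zmodType) (f g : U -> K) x : (f + g) x = f x + g x.
Proof. by []. Qed.
Lemma fctN (U : Type) (K : zmodType) (f : U -> K) x : (- f) x = - f x.
Proof. by []. Qed.
Lemma fct0 (U : Type) (K : zmodType) x : (0 : U -> K) x = 0.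
Proof. by []. Qed.

Section AddOn.
Variables (V W : zmodType) (P : V -> Prop) (f : V -> W).
Hypotheses (P0 : P 0) (PD : forall x y, P x -> P y -> P (x + y))
  (PN : forall x, P x -> P (- x))
  (fD : forall x y, P x -> P y -> f (x + y) = f x + f y).

Lemma aof0 : f 0 = 0.
Proof. by have := fD P0 P0; rewrite addr0 => e; apply: (@addrI _ (f 0)); rewrite addr0 -e. Qed.
Lemma aofN x : P x -> f (- x) = - f x.
Proof.
move=> Px; apply: (@addIr _ (f x)); rewrite -fD ?addNr ?aof0 //; exact: PN.
Qed.
Lemma aPB x y : P x -> P y -> P (x - y).
Proof. by move=> *; apply: PD => //; exact: PN. Qed.
Lemma aofB x y : P x -> P y -> f (x - y) = f x - f y.
Proof. by move=> Px Py; rewrite fD ?aofN //; exact: PN. Qed.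
Lemma aPMn x n : P x -> P (x *+ n).
Proof. by move=> Px; elim: n => [|n IH]; rewrite ?mulr0n // mulrS; apply: PD. Qed.
Lemma aofMn x n : P x -> f (x *+ n) = f x *+ n.
Proof.
move=> Px; elim: n => [|n IH]; first by rewrite !mulr0n aof0.
by rewrite !mulrS fD ?IH //; exact: aPMn.
Qed.
Lemma aPMz x z : P x -> P (x *~ z).
Proof. by move=> Px; case: z => n; rewrite /intmul; [|apply: PN]; apply: aPMn. Qed.
Lemma aofMz x z : P x -> f (x *~ z) = f x *~ z.
Proof.
by move=> Px; case: z => n; rewrite /intmul ?aofN ?aofMn //; exact: aPMn.
Qed.
Lemma aPS (J : Type) (r : seq J) (Q : pred J) (F : J -> V) :
  (forall i, Q i -> P (F i)) -> P (\sum_(i <- r | Q i) F i).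
Proof. by move=> PF; elim/big_rec: _ => // i x Qi Px; apply: PD => //; exact: PF. Qed.
Lemma aofS (J : Type) (r : seq J) (Q : pred J) (F : J -> V) :
  (forall i, Q i -> P (F i)) -> f (\sum_(i <- r | Q i) F i) = \sum_(i <- r | Q i) f (F i).
Proof.
move=> PF; elim: r => [|i r IH]; first by rewrite !big_nil aof0.
rewrite !big_cons; case: ifP => Qi //; rewrite fD ?IH //; first exact: PF.
exact: aPS.
Qed.
End AddOn.

Section Basics.
Variables (gT : finGroupType) (X : zmodType) (act : gT -> X -> X) (H : {group gT}).
Hypotheses (abG : abelian [set: gT])
  (actD : forall g x y, act g (x + y) = act g x + act g y)
  (act1 : forall x, act 1%g x = x)
  (actM : forall g h x, act (g * h)%g x = act g (act h x)).

Lemma commG (g h : gT) : (g * h = h * g)%g.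
Proof. by move/centsP: abG => /(_ g (finset.in_setT g) h (finset.in_setT h)). Qed.

Lemma nH (x : gT) : x \in 'N(H)%g.
Proof. by have := sub_abelian_norm abG (finset.subsetT H); move/fintype.subsetP; apply; rewrite finset.in_setT. Qed.

Lemma commQ (c d : coset_of H) : (c * d = d * c)%g.
Proof.
by rewrite -(coset_reprK c) -(coset_reprK d) -!(cosetMx nH) commG.
Qed.

Local Notation D := (@dual gT X act (fun _ => True)).
Local Notation Y := ((X -> ZG gT) -> ZG gT).
Local Notation Sv := (invar (@dual_act gT (X -> ZG gT)) (bidual_set act) H).
Local Notation actY := (@cqact gT H _ (@dual_act gT (X -> ZG gT))).
Local Notation E := (@dual (coset_of H) Y actY Sv).

Lemma dual_actE (T : finGroupType) (A : Type) g (f : A -> ZG T) x :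
  dual_act g f x = gtrans g (f x).
Proof. by []. Qed.

Lemma dual_actM (T : finGroupType) (A : Type) g h (f : A -> ZG T) :
  dual_act (g * h)%g f = dual_act g (dual_act h f).
Proof. by apply/funext => x; rewrite !dual_actE gtransM. Qed.

Lemma dual_act1 (T : finGroupType) (A : Type) (f : A -> ZG T) : dual_act 1%g f = f.
Proof. by apply/funext => x; rewrite dual_actE gtrans1. Qed.

Lemma DD f : D f -> forall x y, f (x + y) = f x + f y.
Proof. by case=> [[fD _] _] x y; apply: fD. Qed.
Lemma Dact f : D f -> forall g x, f (act g x) = gtrans g (f x).
Proof. by case=> [[_ fA] _] g x; apply: fA. Qed.
Lemma D0 : D 0.
Proof. by split => [|x []]; split => *; rewrite /= ?addr0 ?gtrans0. Qed.
Lemma DplusD f f' : D f -> D f' -> D (f + f').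
Proof.
move=> Df Df'; split => [|x []]; split => [x y _ _|g x _]; rewrite !fctD.
  by rewrite (DD Df) (DD Df') addrACA.
by rewrite (Dact Df) (Dact Df') gtransD.
Qed.
Lemma DN f : D f -> D (- f).
Proof.
move=> Df; split => [|x []]; split => [x y _ _|g x _]; rewrite !fctN.
  by rewrite (DD Df) opprD.
by rewrite (Dact Df) gtransN.
Qed.
Lemma Ddual_act g f : D f -> D (dual_act g f).
Proof.
move=> Df; split => [|x []]; split => [x y _ _|h x _]; rewrite !dual_actE.
  by rewrite (DD Df) gtransD.
by rewrite (Dact Df) -!gtransM commG.
Qed.
Lemma DaddT f : D f -> forall x y, f (x + y) = f x + f y.
Proof. exact: DD. Qed.

Lemma Df0 f : D f -> f 0 = 0.
Proof. move=> Df; exact: (@aof0 X _ (fun _ => True) f I (fun x y _ _ => DD Df x y)). Qed.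
Lemma DfMz f x z : D f -> f (x *~ z) = f x *~ z.
Proof.
move=> Df; exact: (@aofMz X _ (fun _ => True) f I (fun _ _ _ _ => I) (fun _ _ => I)
   (fun x y _ _ => DD Df x y)).
Qed.
Lemma DfS f (J : Type) (r : seq J) (Q : pred J) (F : J -> X) : D f ->
  f (\sum_(i <- r | Q i) F i) = \sum_(i <- r | Q i) f (F i).
Proof.
move=> Df; exact: (@aofS X _ (fun _ => True) f I (fun _ _ _ _ => I)
   (fun x y _ _ => DD Df x y)).
Qed.

Lemma DMz f z : D f -> D (f *~ z).
Proof. exact: (@aPMz _ D D0 DplusD DN). Qed.
Lemma DS (J : Type) (r : seq J) (Q : pred J) (F : J -> X -> ZG gT) :
  (forall i, Q i -> D (F i)) -> D (\sum_(i <- r | Q i) F i).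
Proof. exact: (@aPS _ D D0 DplusD). Qed.

Lemma SvD phi : Sv phi -> forall f f', D f -> D f' -> phi (f + f') = phi f + phi f'.
Proof. by case=> [[[pD _] _] _] f f' Df Df'; apply: pD. Qed.
Lemma Svact phi : Sv phi -> forall g f, D f -> phi (dual_act g f) = gtrans g (phi f).
Proof. by case=> [[[_ pA] _] _] g f Df; apply: pA. Qed.
Lemma Svout phi : Sv phi -> forall f, ~ D f -> phi f = 0.
Proof. by case=> [[_ pO] _] f nDf; apply: pO. Qed.
Lemma SvH phi : Sv phi -> forall h, h \in H -> dual_act h phi = phi.
Proof. by case=> _ pH h hH; apply: pH. Qed.
Lemma SvHinv phi f : Sv phi -> Hinv H (phi f).
Proof. by move=> Sp h hH; rewrite -dual_actE (SvH Sp hH). Qed.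

Lemma Sv_coset phi a b : Sv phi -> coset H a = coset H b -> dual_act a phi = dual_act b phi.
Proof.
move=> Sp e.
have abH : (a^-1 * b \in H)%g.
  have : ((a^-1 * (b^-1)^-1)%g \in H) by apply/(coset_eqP nH); rewrite !(cosetVx nH) e.
  by rewrite invgK.
by rewrite -[b](mulKVg a) dual_actM (SvH Sp abH).
Qed.

Lemma Sv0 : Sv 0.
Proof.
split; [split; [split|]|] => [f f' _ _|g f _|f _|h _] //=; rewrite ?addr0 ?gtrans0 //.
by apply/funext => f; rewrite dual_actE gtrans0.
Qed.
Lemma SvplusD phi psi : Sv phi -> Sv psi -> Sv (phi + psi).
Proof.
move=> Sp Sq; split; [split; [split|]|] => [f f' Df Df'|g f Df|f nDf|h hH]; rewrite ?fctD.
- by rewrite (SvD Sp) // (SvD Sq) // addrACA.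
- by rewrite (Svact Sp) // (Svact Sq) // gtransD.
- by rewrite (Svout Sp) // (Svout Sq) // addr0.
- apply/funext => f; rewrite dual_actE fctD gtransD.
  by rewrite -!dual_actE (SvH Sp hH) (SvH Sq hH).
Qed.
Lemma SvN phi : Sv phi -> Sv (- phi).
Proof.
move=> Sp; split; [split; [split|]|] => [f f' Df Df'|g f Df|f nDf|h hH]; rewrite ?fctN.
- by rewrite (SvD Sp) // opprD.
- by rewrite (Svact Sp) // gtransN.
- by rewrite (Svout Sp) // oppr0.
- apply/funext => f; rewrite dual_actE fctN gtransN.
  by rewrite -!dual_actE (SvH Sp hH).
Qed.
Lemma Svdual_act g phi : Sv phi -> Sv (dual_act g phi).
Proof.
move=> Sp; split; [split; [split|]|] => [f f' Df Df'|g' f Df|f nDf|h hH];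
  rewrite ?dual_actE.
- by rewrite (SvD Sp) // gtransD.
- by rewrite (Svact Sp) // -!gtransM commG.
- by rewrite (Svout Sp) // gtrans0.
- by rewrite -dual_actM commG dual_actM (SvH Sp hH).
Qed.

Lemma SvMz phi z : Sv phi -> Sv (phi *~ z).
Proof. exact: (@aPMz _ Sv Sv0 SvplusD SvN). Qed.
Lemma SvMn phi n : Sv phi -> Sv (phi *+ n).
Proof. exact: (@aPMn _ Sv Sv0 SvplusD). Qed.
Lemma SvS (J : Type) (r : seq J) (Q : pred J) (F : J -> Y) :
  (forall i, Q i -> Sv (F i)) -> Sv (\sum_(i <- r | Q i) F i).
Proof. exact: (@aPS _ Sv Sv0 SvplusD). Qed.

Lemma actY_Sv c phi : Sv phi -> actY c phi = dual_act (repr (c : {set gT})) phi.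
Proof. by []. Qed.

Lemma actY_coset g phi : Sv phi -> actY (coset H g) phi = dual_act g phi.
Proof.
move=> Sp; rewrite /cqact; apply: Sv_coset => //; exact: coset_reprK.
Qed.

Lemma ED e : E e -> forall phi psi, Sv phi -> Sv psi -> e (phi + psi) = e phi + e psi.
Proof. by case=> [[eD _] _] phi psi Sp Sq; apply: eD. Qed.
Lemma Eact e : E e -> forall c phi, Sv phi -> e (actY c phi) = gtrans c (e phi).
Proof. by case=> [[_ eA] _] c phi Sp; apply: eA. Qed.
Lemma Eout e : E e -> forall phi, ~ Sv phi -> e phi = 0.
Proof. by case=> [_ eO] phi nSp; apply: eO. Qed.
Lemma Eact' e : E e -> forall g phi, Sv phi -> e (dual_act g phi) = gtrans (coset H g) (e phi).
Proof. by move=> Ee g phi Sp; rewrite -(Eact Ee) // actY_coset. Qed.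

Lemma E0 : E 0.
Proof. by split => [|phi _] //; split => [phi psi _ _|c phi _] /=; rewrite ?addr0 ?gtrans0. Qed.
Lemma EplusD e e' : E e -> E e' -> E (e + e').
Proof.
move=> Ee Ee'; split => [|phi nSp]; rewrite ?fctD; last by rewrite (Eout Ee) // (Eout Ee') // addr0.
split => [phi psi Sp Sq|c phi Sp]; rewrite !fctD.
  by rewrite (ED Ee) // (ED Ee') // addrACA.
by rewrite (Eact Ee) // (Eact Ee') // gtransD.
Qed.
Lemma EN e : E e -> E (- e).
Proof.
move=> Ee; split => [|phi nSp]; rewrite ?fctN; last by rewrite (Eout Ee) // oppr0.
split => [phi psi Sp Sq|c phi Sp]; rewrite !fctN.
  by rewrite (ED Ee) // opprD.
by rewrite (Eact Ee) // gtransN.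
Qed.
Lemma Edual_act c e : E e -> E (dual_act c e).
Proof.
move=> Ee; split => [|phi nSp]; rewrite ?dual_actE; last by rewrite (Eout Ee) // gtrans0.
split => [phi psi Sp Sq|c' phi Sp]; rewrite !dual_actE.
  by rewrite (ED Ee) // gtransD.
by rewrite (Eact Ee) // -!gtransM commQ.
Qed.
Lemma EMn e n : E e -> E (e *+ n).
Proof. exact: (@aPMn _ E E0 EplusD). Qed.

Lemma Ee_S e (J : Type) (r : seq J) (Q : pred J) (F : J -> Y) : E e ->
  (forall i, Q i -> Sv (F i)) -> e (\sum_(i <- r | Q i) F i) = \sum_(i <- r | Q i) e (F i).
Proof. move=> Ee; exact: (@aofS _ _ Sv e Sv0 SvplusD (ED Ee)). Qed.
Lemma Ee_Mz e phi z : E e -> Sv phi -> e (phi *~ z) = e phi *~ z.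
Proof. move=> Ee; exact: (@aofMz _ _ Sv e Sv0 SvplusD SvN (ED Ee)). Qed.
Lemma Ee_Mn e phi n : E e -> Sv phi -> e (phi *+ n) = e phi *+ n.
Proof. move=> Ee; exact: (@aofMn _ _ Sv e Sv0 SvplusD (ED Ee)). Qed.
Lemma Sv_phiMn phi f n : Sv phi -> D f -> phi (f *+ n) = phi f *+ n.
Proof. move=> Sp; exact: (@aofMn _ _ D phi D0 DplusD (SvD Sp)). Qed.
Lemma Sv_phiMz phi f z : Sv phi -> D f -> phi (f *~ z) = phi f *~ z.
Proof. move=> Sp; exact: (@aofMz _ _ D phi D0 DplusD DN (SvD Sp)). Qed.
Lemma Sv_phiS phi (J : Type) (r : seq J) (Q : pred J) (F : J -> X -> ZG gT) : Sv phi ->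
  (forall i, Q i -> D (F i)) -> phi (\sum_(i <- r | Q i) F i) = \sum_(i <- r | Q i) phi (F i).
Proof. move=> Sp; exact: (@aofS _ _ D phi D0 DplusD (SvD Sp)). Qed.
Lemma Sv_phiB phi f f' : Sv phi -> D f -> D f' -> phi (f - f') = phi f - phi f'.
Proof. move=> Sp; exact: (@aofB _ _ D phi D0 DN (SvD Sp)). Qed.

Definition tilde (f : X -> ZG gT) : Y -> ZG (coset_of H) :=
  fun phi => if `[< Sv phi >] then iinv H (phi f) else 0.

Lemma tildeE f phi : Sv phi -> tilde f phi = iinv H (phi f).
Proof. by move=> Sp; rewrite /tilde asboolT. Qed.
Lemma tilde_out f phi : ~ Sv phi -> tilde f phi = 0.
Proof. by move=> nSp; rewrite /tilde asboolF. Qed.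

Lemma tilde_E f : D f -> E (tilde f).
Proof.
move=> Df; split => [|phi nSp]; last exact: tilde_out.
split => [phi psi Sp Sq|c phi Sp].
  by rewrite !tildeE //; [rewrite -iinvD | exact: SvplusD].
rewrite !tildeE //; last by rewrite /cqact; exact: Svdual_act.
rewrite /cqact dual_actE iinv_gtrans ?coset_reprK //; [exact: nH | exact: SvHinv].
Qed.

Lemma tildeD f f' : D f -> D f' -> tilde (f + f') = tilde f + tilde f'.
Proof.
move=> Df Df'; apply/funext => phi /=.
case: (pselect (Sv phi)) => Sp; rewrite fctD; last by rewrite !tilde_out // addr0.
by rewrite !tildeE // (SvD Sp) // iinvD.
Qed.

Lemma tilde_act g f : D f -> tilde (dual_act g f) = dual_act (coset H g) (tilde f).
Proof.
move=> Df; apply/funext => phi; rewrite dual_actE.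
case: (pselect (Sv phi)) => Sp; last by rewrite !tilde_out // gtrans0.
rewrite !tildeE // (Svact Sp) // iinv_gtrans //; [exact: nH | exact: SvHinv].
Qed.

Lemma tildeMn f n : D f -> tilde (f *+ n) = tilde f *+ n.
Proof.
move=> Df; apply/funext => phi; rewrite (natmulfctE (tilde f)).
case: (pselect (Sv phi)) => Sp; last by rewrite !tilde_out // mul0rn.
by rewrite !tildeE // Sv_phiMn // iinvMn.
Qed.

End Basics.

Lemma int_mulIn (c : nat) (a b : int) : (0 < c)%N -> a *+ c = b *+ c -> a = b.
Proof.
move=> c0; rewrite -[a *+ c]mulr_natr -[b *+ c]mulr_natr => /mulIf; apply.
by rewrite pnatr_eq0 -lt0n.
Qed.

Section KFsec.
Variables (gT : finGroupType) (X : zmodType) (act : gT -> X -> X) (H : {group gT}).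
Hypotheses (abG : abelian [set: gT])
  (actD : forall g x y, act g (x + y) = act g x + act g y)
  (act1 : forall x, act 1%g x = x)
  (actM : forall g h x, act (g * h)%g x = act g (act h x)).

Local Notation D := (@dual gT X act (fun _ => True)).
Local Notation Y := ((X -> ZG gT) -> ZG gT).
Local Notation Sv := (invar (@dual_act gT (X -> ZG gT)) (bidual_set act) H).
Local Notation actY := (@cqact gT H _ (@dual_act gT (X -> ZG gT))).
Local Notation E := (@dual (coset_of H) Y actY Sv).

Variables (gens : seq X)
  (hg : forall x : X, exists r : 'I_(size gens) -> ZG gT,
      x = \sum_(i < size gens) gscale act (r i) gens`_i).

Lemma D_det f : D f -> (forall i : 'I_(size gens), f gens`_i = 0) -> f = 0.
Proof.
move=> Df f0; apply/funext => x; have [r ->] := hg x.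
rewrite (DfS _ _ _ Df) fct0 big1 // => i _.
rewrite /gscale (DfS _ _ _ Df) big1 // => g _.
by rewrite (DfMz _ _ Df) (Dact Df) f0 gtrans0 mul0rz.
Qed.


Definition coD (f : X -> ZG gT) (p : 'I_(size gens) * gT) : int := f gens`_(p.1) p.2.

Lemma D_span : exists t (bs : 'I_t -> X -> ZG gT), (forall l, D (bs l)) /\
  forall f, D f -> exists c : nat, exists z : 'I_t -> int,
     (0 < c)%N /\ f *+ c = \sum_l bs l *~ z l.
Proof.
have [t [bs [Dbs _ good]]] := lattice_basis D coD.
exists t, bs; split => // f Df; have [c [z [c0 hz]]] := good f Df.
exists c, z; split => //.
apply/eqP; rewrite -subr_eq0; apply/eqP; apply: D_det.
  apply: DplusD; first exact: (aPMn (@D0 _ _ act) (@DplusD _ _ act) c Df).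
  apply: DN; apply: DS => l _; exact: DMz.
move=> i; apply/ffunP => x; have := hz (i, x); rewrite /coD /= => e.
rewrite fctD fctN natmulfctE fct_sum !ffunE ffunMnE e sum_ffunE.
rewrite -sumrB big1 // => l _; rewrite fct_mulz ffunMzE mulrzz mulrC subrr.
by [].
Qed.


Section Ssec.
Variables (t : nat) (bs : 'I_t -> X -> ZG gT).
Hypotheses (Dbs : forall l, D (bs l))
  (spanD : forall f, D f -> exists c : nat, exists z : 'I_t -> int,
     (0 < c)%N /\ f *+ c = \sum_l bs l *~ z l).

Definition coS (phi : Y) (p : 'I_t * gT) : int := phi (bs p.1) (p.2^-1)%g.

Lemma S_span : exists t2 (ps : 'I_t2 -> Y), [/\ (forall j, Sv (ps j)),
  row_free (comx coS ps) &
  forall phi, Sv phi -> exists c : nat, exists z : 'I_t2 -> int,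
     (0 < c)%N /\ phi *+ c = \sum_j ps j *~ z j].
Proof.
have [t2 [ps [Sps fr good]]] := lattice_basis Sv coS.
exists t2, ps; split => // phi Sp; have [c [z [c0 hz]]] := good phi Sp.
exists c, z; split => //.
set psi := phi *+ c - \sum_j ps j *~ z j.
have Spsi : Sv psi.
  apply: SvplusD; first exact: SvMn.
  apply: SvN; apply: SvS => j _; exact: SvMz.
have psib l : psi (bs l) = 0.
  apply/ffunP => y; have := hz (l, y^-1)%g; rewrite /coS /= invgK => e.
  rewrite /psi fctD fctN natmulfctE fct_sum !ffunE ffunMnE e sum_ffunE.
  rewrite -sumrB big1 // => j _; rewrite fct_mulz ffunMzE mulrzz mulrC subrr.
  by [].
have psi0 : psi = 0.
  apply/funext => f; case: (pselect (D f)) => Df; last by rewrite (Svout Spsi).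
  have [c' [z' [c'0 e']]] := spanD Df.
  apply: (ZG_mul0n c'0); rewrite -(Sv_phiMn c' Spsi Df) e' (Sv_phiS _ Spsi); last by move=> l _; exact: DMz.
  by rewrite big1 // => l _; rewrite (Sv_phiMz _ Spsi (Dbs l)) psib mul0rz.
by apply/eqP; rewrite -subr_eq0; apply/eqP.
Qed.

End Ssec.

Lemma KF e : E e -> exists k : nat, exists f, [/\ (0 < k)%N, D f & e *+ k = tilde act H f].
Proof.
move=> Ee.
have [t [bs [Dbs spanD]]] := D_span.
have [t2 [ps [Sps fr spanS]]] := S_span Dbs spanD.
have [k [w [k0 hw]]] := lattice_solve fr (fun j => e (ps j) 1%g).
pose f := \sum_(p : 'I_t * gT) dual_act p.2 (bs p.1) *~ w p.
have Dterm : forall p : 'I_t * gT, D (dual_act p.2 (bs p.1) *~ w p).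
  by move=> p; apply: DMz; apply: (Ddual_act abG); exact: Dbs.
have Df : D f by apply: DS => p _; exact: Dterm.
pose L (phi : Y) := \sum_p coS bs phi p * w p.
have c1 : forall phi, Sv phi -> phi f 1%g = L phi.
  move=> phi Sp; rewrite (Sv_phiS _ Sp); last by move=> p _; exact: Dterm.
  rewrite sum_ffunE; apply: eq_bigr => p _.
  rewrite (Sv_phiMz _ Sp); last by apply: (Ddual_act abG); exact: Dbs.
  by rewrite (Svact Sp) ?ffunMzE ?gtransE ?mulg1 ?mulrzz //; exact: Dbs.
have LD : forall phi psi, L (phi + psi) = L phi + L psi.
  by move=> phi psi; rewrite /L -big_split; apply: eq_bigr => p _; rewrite /coS fctD ffunE mulrDl.
have LMn : forall phi n, L (phi *+ n) = L phi *+ n.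
  by move=> phi n; apply: (aofMn (P := fun _ => True) I (fun _ _ _ _ => I) (fun x y _ _ => LD x y)).
have LMz : forall phi z, L (phi *~ z) = L phi *~ z.
  by move=> phi z; apply: (aofMz (P := fun _ => True) I (fun _ _ _ _ => I) (fun _ _ => I) (fun x y _ _ => LD x y)).
have LS : forall (J : Type) (r : seq J) (F : J -> Y), L (\sum_(j <- r) F j) = \sum_(j <- r) L (F j).
  by move=> J r F; apply: (aofS (P := fun _ => True) I (fun _ _ _ _ => I) (fun x y _ _ => LD x y)).
have c2 : forall phi, Sv phi -> L phi = e phi 1%g *+ k.
  move=> phi Sp; have [c [z [c0 ez]]] := spanS _ Sp.
  have eq1 : e (phi *+ c) 1%g = e phi 1%g *+ c by rewrite (Ee_Mn _ Ee Sp) ffunMnE.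
  apply: (int_mulIn c0); rewrite -LMn ez LS mulrnAC -eq1.
  rewrite ez (Ee_S _ Ee); last by move=> j _; exact: SvMz.
  rewrite sum_ffunE -sumrMnl; apply: eq_bigr => j _.
  rewrite LMz (Ee_Mz _ Ee (Sps j)) ffunMzE.
  have -> : L (ps j) = e (ps j) 1%g *+ k by rewrite -hw.
  by rewrite !mulrzz mulrnAl.
have c3 : forall phi, Sv phi -> iinv H (phi f) = e phi *+ k.
  move=> phi Sp; apply/ffunP => c; rewrite ffunE ffunMnE.
  have Sp' := Svdual_act abG (repr (c : {set gT}))^-1 Sp.
  have := c1 _ Sp'; rewrite c2 // dual_actE gtransE invgK mulg1 => ->.
  rewrite (Eact' abG Ee _ Sp) gtransE mulg1 -(cosetVx (nH H abG)) invgK coset_reprK.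
  by [].
exists k, f; split => //; apply/funext => phi; rewrite (natmulfctE e).
case: (pselect (Sv phi)) => Sp; first by rewrite tildeE // c3.
by rewrite (Eout Ee) // tilde_out // mul0rn.
Qed.

End KFsec.

Section Upd.
Variables (s : nat) (A : Type).
Implicit Types (fs : 'I_s -> A).
Lemma upd_same fs i a : upd fs i a i = a.
Proof. by rewrite /upd eqxx. Qed.
Lemma upd_other fs i a j : j != i -> upd fs i a j = fs j.
Proof. by rewrite /upd => /negbTE ->. Qed.
Lemma upd_id fs i : upd fs i (fs i) = fs.
Proof. by apply/funext => j; rewrite /upd; case: eqP => // ->. Qed.
Lemma upd_upd fs i a b : upd (upd fs i a) i b = upd fs i b.
Proof. by apply/funext => j; rewrite /upd; case: eqP. Qed.
Lemma upd_updC fs i j a b : i != j -> upd (upd fs i a) j b = upd (upd fs j b) i a.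
Proof.
move=> ij; apply/funext => k; rewrite /upd; case: (eqVneq k j) => [->|kj] //.
by rewrite eq_sym (negbTE ij).
Qed.
Lemma upd_comp (B : Type) (h : A -> B) fs i a :
  (fun k => h (upd fs i a k)) = upd (fun k => h (fs k)) i (h a).
Proof. by apply/funext => k; rewrite /upd; case: eqP. Qed.
End Upd.

Section GenDual.
Variables (T : finGroupType) (V : zmodType) (act : T -> V -> V) (S : V -> Prop).
Lemma dual0 : dual act S 0.
Proof. by split => // ; split => *; rewrite ?fct0 ?addr0 ?gtrans0. Qed.
Lemma dualD f f' : dual act S f -> dual act S f' -> dual act S (f + f').
Proof.
move=> [[fD fA] fO] [[gD gA] gO]; split; first split.
- by move=> x y Sx Sy; rewrite !fctD fD // gD // addrACA.
- by move=> g x Sx; rewrite !fctD fA // gA // gtransD.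
- by move=> x nSx; rewrite fctD fO // gO // addr0.
Qed.
Lemma dualMn f n : dual act S f -> dual act S (f *+ n).
Proof.
move=> Df; elim: n => [|n IH]; first by rewrite mulr0n; exact: dual0.
by rewrite mulrS; apply: dualD.
Qed.
End GenDual.

Section EB.
Variables (T : finGroupType) (V : zmodType) (act : T -> V -> V) (S : V -> Prop) (s : nat).
Local Notation Du := (dual act S).
Definition multiadd (F : ('I_s -> V -> ZG T) -> ZG T) :=
  forall (fs : 'I_s -> V -> ZG T) (i : 'I_s) (f f' : V -> ZG T),
     (forall k, Du (fs k)) -> Du f -> Du f' ->
     F (upd fs i (f + f')) = F (upd fs i f) + F (upd fs i f').

Lemma eb_add F : ext_bidual act S s F -> multiadd F.
Proof. by case. Qed.
Lemma eb_act F : ext_bidual act S s F -> forall fs i g, (forall k, Du (fs k)) ->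
  F (upd fs i (dual_act g (fs i))) = gtrans g (F fs).
Proof. by case=> _ []. Qed.
Lemma eb_alt F : ext_bidual act S s F -> forall fs i j, (forall k, Du (fs k)) ->
  i != j -> fs i = fs j -> F fs = 0.
Proof. by case=> _ [_ []]. Qed.
Lemma eb_out F : ext_bidual act S s F -> forall fs, ~ (forall k, Du (fs k)) -> F fs = 0.
Proof. by case=> _ [_ []]. Qed.

Lemma multiadd_Mn F : multiadd F -> forall fs i f n, (forall k, Du (fs k)) -> Du f ->
  F (upd fs i (f *+ n)) = F (upd fs i f) *+ n.
Proof.
move=> FA fs i f n Dfs Df; elim: n => [|n IH].
  rewrite !mulr0n; have := FA fs i 0 0 Dfs (dual0 act S) (dual0 act S).
  by rewrite addr0 => e; apply: (@addrI _ (F (upd fs i 0))); rewrite -e addr0.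
by rewrite !mulrS FA // ?IH //; exact: dualMn.
Qed.

Lemma multiadd_scale F : multiadd F -> forall (fs : 'I_s -> V -> ZG T) (ks : 'I_s -> nat),
  (forall k, Du (fs k)) ->
  F (fun i => fs i *+ ks i) = F fs *+ \prod_i ks i.
Proof.
move=> FA fs ks Dfs.
suff : forall m, (m <= s)%N ->
  F (fun i : 'I_s => if (i < m)%N then fs i *+ ks i else fs i) =
  F fs *+ \prod_(i < s | (i < m)%N) ks i.
  move/(_ s (leqnn s)); rewrite big_mkcond /=.
  have -> : (fun i : 'I_s => if (i < s)%N then fs i *+ ks i else fs i) = (fun i => fs i *+ ks i).
    by apply/funext => i; rewrite ltn_ord.
  by move=> ->; congr (_ *+ _); apply: eq_bigr => i _; rewrite ltn_ord.
elim=> [|m IH] lems.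
  have -> : (fun i : 'I_s => if (i < 0)%N then fs i *+ ks i else fs i) = fs by [].
  by rewrite big_pred0 ?mulr1n // => i; rewrite ltn0.
pose i0 : 'I_s := Ordinal lems.
have Dm : forall k, Du ((fun i : 'I_s => if (i < m)%N then fs i *+ ks i else fs i) k).
  by move=> k /=; case: ifP => _; [exact: dualMn | exact: Dfs].
have -> : (fun i : 'I_s => if (i < m.+1)%N then fs i *+ ks i else fs i) =
  upd (fun i : 'I_s => if (i < m)%N then fs i *+ ks i else fs i) i0 (fs i0 *+ ks i0).
  apply/funext => j; rewrite /upd; case: eqP => [->|/eqP ne]; first by rewrite /= ltnSn.
  rewrite ltnS leq_eqVlt; have -> : (nat_of_ord j == m) = false.
    by apply/negbTE; apply: contra ne => /eqP e; apply/eqP/val_inj.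
  by [].
rewrite (multiadd_Mn FA i0 (ks i0) Dm (Dfs i0)).
have -> : upd (fun i : 'I_s => if (i < m)%N then fs i *+ ks i else fs i) i0 (fs i0) =
          (fun i : 'I_s => if (i < m)%N then fs i *+ ks i else fs i).
  by apply/funext => j; rewrite /upd; case: eqP => [->|] //=; rewrite ltnn.
rewrite IH ?(ltnW lems) // -mulrnA; congr (_ *+ _).
rewrite [RHS](bigD1 i0) /= ?ltnSn // mulnC; congr (_ * _)%N.
apply: eq_bigl => j; rewrite ltnS.
case: (eqVneq j i0) => [->|ne] /=; first by rewrite ltnn andbF.
rewrite andbT [RHS]leq_eqVlt.
have -> : (nat_of_ord j == m) = false.
  by apply/negbTE; apply: contra ne => /eqP e; apply/eqP/val_inj.
by [].
Qed.

End EB.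

Section MainSec.
Variables (gT : finGroupType) (X : zmodType) (act : gT -> X -> X) (H : {group gT}) (s : nat).
Hypotheses (abG : abelian [set: gT]).
Variables (gens : seq X)
  (hg : forall x : X, exists r : 'I_(size gens) -> ZG gT,
      x = \sum_(i < size gens) gscale act (r i) gens`_i).

Local Notation Q := (coset_of H).
Local Notation D := (@dual gT X act (fun _ => True)).
Local Notation Y := ((X -> ZG gT) -> ZG gT).
Local Notation Sv := (invar (@dual_act gT (X -> ZG gT)) (bidual_set act) H).
Local Notation actY := (@cqact gT H _ (@dual_act gT (X -> ZG gT))).
Local Notation E := (@dual Q Y actY Sv).
Local Notation SX := (ext_bidual actY Sv s).
Local Notation SY := (invar (@bid_act gT ('I_s -> (X -> ZG gT)))
             (ext_bidual act (fun _ => True) s) H).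
Local Notation nHH := (nH H abG).
Local Notation til := (tilde act H).

Definition Phi (F : ('I_s -> Y -> ZG Q) -> ZG Q) : ('I_s -> X -> ZG gT) -> ZG gT :=
  fun fs => if `[< forall k, D (fs k) >] then iota (F (fun i => til (fs i))) else 0.

Lemma PhiE F fs : (forall k, D (fs k)) -> Phi F fs = iota (F (fun i => til (fs i))).
Proof. by move=> Dfs; rewrite /Phi asboolT. Qed.
Lemma Phi_out F fs : ~ (forall k, D (fs k)) -> Phi F fs = 0.
Proof. by move=> nD; rewrite /Phi asboolF. Qed.

Lemma tilE (fs : 'I_s -> X -> ZG gT) : (forall k, D (fs k)) -> forall k, E (til (fs k)).
Proof. by move=> Dfs k; apply: tilde_E => //; exact: Dfs. Qed.

Lemma Dupd (fs : 'I_s -> X -> ZG gT) i f : (forall k, D (fs k)) -> D f -> forall k, D (upd fs i f k).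
Proof. by move=> Dfs Df k; rewrite /upd; case: eqP. Qed.

Lemma Phi_SY F : SX F -> SY (Phi F).
Proof.
move=> SF; split; last first.
  move=> h hH; apply/funext => fs; rewrite /bid_act.
  case: (pselect (forall k, D (fs k))) => Dfs; last by rewrite Phi_out // gtrans0.
  by rewrite PhiE // (iota_Hinv nHH).
split; [|split; [|split]].
- move=> fs i f f' Dfs Df Df'.
  rewrite !PhiE; try by apply: Dupd => //; apply: DplusD.
  rewrite !upd_comp tildeD // (eb_add SF) ?iotaD //; first exact: tilE.
  + exact: tilde_E.
  + exact: tilde_E.
- move=> fs i g Dfs.
  rewrite !PhiE //; last by apply: Dupd => //; apply: (Ddual_act abG).
  rewrite upd_comp tilde_act // (eb_act SF) ?(iota_gtrans nHH) //; exact: tilE.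
- move=> fs i j Dfs ij e; rewrite PhiE // (eb_alt SF (tilE Dfs) ij) ?iota0 //.
  by rewrite e.
- by move=> fs nD; rewrite Phi_out.
Qed.

Lemma PhiD F F' : Phi (F + F') = Phi F + Phi F'.
Proof.
apply/funext => fs; rewrite fctD.
case: (pselect (forall k, D (fs k))) => Dfs; last by rewrite !Phi_out // addr0.
by rewrite !PhiE // fctD iotaD.
Qed.

Lemma Phi_act c F : Phi (bid_act c F) = cqact (@bid_act gT ('I_s -> (X -> ZG gT))) c (Phi F).
Proof.
apply/funext => fs; rewrite /cqact /bid_act.
case: (pselect (forall k, D (fs k))) => Dfs; last by rewrite !Phi_out // gtrans0.
by rewrite !PhiE // -(iota_gtrans nHH) coset_reprK.
Qed.

Definition kfc (e : Y -> ZG Q) : nat * (X -> ZG gT) :=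
  match pselect (E e) with
  | left Ee => let: exist kf _ := cid (let: ex_intro k (ex_intro f h) := KF abG hg Ee in
                 ex_intro (fun kf : nat * (X -> ZG gT) =>
                   [/\ (0 < kf.1)%N, D kf.2 & e *+ kf.1 = til kf.2]) (k, f) h) in kf
  | right _ => (1%N, 0)
  end.

Lemma kfcP e : E e -> [/\ (0 < (kfc e).1)%N, D (kfc e).2 & e *+ (kfc e).1 = til (kfc e).2].
Proof.
move=> Ee; rewrite /kfc; case: pselect => // Ee'.
by case: cid => kf.
Qed.

Lemma Phi_inj F F' : SX F -> SX F' -> Phi F = Phi F' -> F = F'.
Proof.
move=> SF SF' eP; apply/funext => es.
case: (pselect (forall k, E (es k))) => Ees; last by rewrite !(eb_out SF) // (eb_out SF').
pose ks i := (kfc (es i)).1; pose fs i := (kfc (es i)).2.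
have Dfs : forall k, D (fs k) by move=> k; case: (kfcP (Ees k)).
have e1 : (fun i => es i *+ ks i) = (fun i => til (fs i)).
  by apply/funext => i; case: (kfcP (Ees i)).
have K0 : (0 < \prod_i ks i)%N by rewrite prodn_gt0 // => i; case: (kfcP (Ees i)).
apply: (ZG_mulIn K0).
rewrite -(multiadd_scale (eb_add SF)) // -(multiadd_scale (eb_add SF')) // e1.
apply: (@iota_inj _ H); rewrite -!PhiE //; by rewrite eP.
Qed.

End MainSec.

Section SurjSec.
Variables (gT : finGroupType) (X : zmodType) (act : gT -> X -> X) (H : {group gT}) (s : nat).
Hypotheses (abG : abelian [set: gT]).
Variables (gens : seq X)
  (hg : forall x : X, exists r : 'I_(size gens) -> ZG gT,
      x = \sum_(i < size gens) gscale act (r i) gens`_i).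

Local Notation Q := (coset_of H).
Local Notation D := (@dual gT X act (fun _ => True)).
Local Notation Y := ((X -> ZG gT) -> ZG gT).
Local Notation Sv := (invar (@dual_act gT (X -> ZG gT)) (bidual_set act) H).
Local Notation actY := (@cqact gT H _ (@dual_act gT (X -> ZG gT))).
Local Notation E := (@dual Q Y actY Sv).
Local Notation SX := (ext_bidual actY Sv s).
Local Notation SY := (invar (@bid_act gT ('I_s -> (X -> ZG gT)))
             (ext_bidual act (fun _ => True) s) H).
Local Notation nHH := (nH H abG).
Local Notation til := (tilde act H).
Local Notation Dall fs := (forall k, D (fs k)).
Local Notation Eall es := (forall k, E (es k)).

Variable G : ('I_s -> X -> ZG gT) -> ZG gT.
Hypothesis SG : SY G.

Lemma G_Hinv fs : Hinv H (G fs).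
Proof.
move=> h hH; case: SG => _ /(_ h hH) e.
by have := congr1 (fun F => F fs) e.
Qed.

Definition phiF (i : 'I_s) (g : ('I_s -> X -> ZG gT) -> ZG Q) (fs : 'I_s -> X -> ZG gT) : Y :=
  fun f => if `[< D f >] then iota (g (upd fs i f)) else 0.

Fixpoint Gm (m : nat) (es : 'I_s -> Y -> ZG Q) : ('I_s -> X -> ZG gT) -> ZG Q :=
  match m with
  | 0 => fun fs => iinv H (G fs)
  | m'.+1 => fun fs => match (insub m' : option 'I_s) with
                       | Some i => es i (phiF i (Gm m' es) fs)
                       | None => Gm m' es fs end
  end.

Lemma Gm_S m (lt : (m < s)%N) es fs :
  Gm m.+1 es fs = es (Ordinal lt) (phiF (Ordinal lt) (Gm m es) fs).
Proof. by rewrite /= insubT. Qed.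

Lemma phiFE i g fs f : D f -> phiF i g fs f = iota (g (upd fs i f)).
Proof. by move=> Df; rewrite /phiF asboolT. Qed.
Lemma phiF_out i g fs f : ~ D f -> phiF i g fs f = 0.
Proof. by move=> Df; rewrite /phiF asboolF. Qed.

Lemma Gm_Dd m es fs fs' : (forall i : 'I_s, (m <= i)%N -> fs i = fs' i) -> Gm m es fs = Gm m es fs'.
Proof.
elim: m fs fs' => [|m IH] fs fs' e.
  by congr (iinv H (G _)); apply/funext => i; apply: e.
rewrite /=; case: insubP => [i _ vi|nm]; last first.
  apply: IH => i li; exfalso; move/negP: nm; apply.
  exact: (leq_ltn_trans li (ltn_ord i)).
congr (es i _); apply/funext => f; rewrite /phiF; case: ifP => // _; congr iota.
apply: IH => j lj; rewrite /upd; case: eqP => // /eqP nj; apply: e.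
by rewrite ltn_neqAle lj andbT; apply: contra nj => /eqP mj; apply/eqP/val_inj; rewrite /= vi.
Qed.

Lemma Gm_F m es es' fs : (forall j : 'I_s, (j < m)%N -> es j = es' j) -> Gm m es fs = Gm m es' fs.
Proof.
elim: m fs => [|m IH] fs e //=.
case: insubP => [i _ vi|_]; last by apply: IH => j lj; apply: e; exact: ltnW.
rewrite e ?vi //; congr (es' i _); apply/funext => f; rewrite /phiF; case: ifP => // _.
by rewrite IH // => j lj; apply: e; exact: ltnW.
Qed.

Definition InvA m := forall (es : 'I_s -> Y -> ZG Q), Eall es ->
  forall (fs : 'I_s -> X -> ZG gT) (i : 'I_s) (f f' : X -> ZG gT), Dall fs -> (m <= i)%N -> D f -> D f' ->
  Gm m es (upd fs i (f + f')) = Gm m es (upd fs i f) + Gm m es (upd fs i f').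
Definition InvB m := forall (es : 'I_s -> Y -> ZG Q), Eall es ->
  forall (fs : 'I_s -> X -> ZG gT) (i : 'I_s) (g : gT), Dall fs -> (m <= i)%N ->
  Gm m es (upd fs i (dual_act g (fs i))) = gtrans (coset H g) (Gm m es fs).
Definition InvC1 m := forall (es : 'I_s -> Y -> ZG Q), Eall es ->
  forall (fs : 'I_s -> X -> ZG gT) (j : 'I_s) (e e' : Y -> ZG Q), Dall fs -> (j < m)%N -> E e -> E e' ->
  Gm m (upd es j (e + e')) fs = Gm m (upd es j e) fs + Gm m (upd es j e') fs.
Definition InvC2 m := forall (es : 'I_s -> Y -> ZG Q), Eall es ->
  forall (fs : 'I_s -> X -> ZG gT) (j : 'I_s) (c : Q), Dall fs -> (j < m)%N ->
  Gm m (upd es j (dual_act c (es j))) fs = gtrans c (Gm m es fs).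

Lemma Dupd' (fs : 'I_s -> X -> ZG gT) i f : Dall fs -> D f -> Dall (upd fs i f).
Proof. by move=> Dfs Df k; rewrite /upd; case: eqP. Qed.
Lemma Eupd (es : 'I_s -> Y -> ZG Q) i e : Eall es -> E e -> Eall (upd es i e).
Proof. by move=> Ees Ee k; rewrite /upd; case: eqP. Qed.

Lemma phiF_Sv m es fs (i : 'I_s) : InvA m -> InvB m -> Eall es -> Dall fs -> nat_of_ord i = m ->
  Sv (phiF i (Gm m es) fs).
Proof.
move=> hA hB Ees Dfs vi; split; last first.
  move=> h hH; apply/funext => f; rewrite dual_actE.
  case: (pselect (D f)) => Df; last by rewrite phiF_out // gtrans0.
  by rewrite phiFE // (iota_Hinv nHH).
split; [split|].
- move=> f f' Df Df'; rewrite !phiFE //; last exact: DplusD.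
  by rewrite hA ?vi // iotaD.
- move=> g f Df; rewrite !phiFE //; last exact: (Ddual_act abG).
  have := hB es Ees (upd fs i f) i g (Dupd' i Dfs Df); rewrite vi leqnn upd_upd upd_same.
  by move=> /(_ isT) ->; rewrite (iota_gtrans nHH).
- by move=> f nDf; rewrite phiF_out.
Qed.


Lemma Inv0 : [/\ InvA 0, InvB 0, InvC1 0 & InvC2 0].
Proof.
split.
- move=> es Ees fs i f f' Dfs _ Df Df' /=.
  by rewrite (eb_add (proj1 SG) i Dfs Df Df') iinvD.
- move=> es Ees fs i g Dfs _ /=.
  by rewrite (eb_act (proj1 SG) i g Dfs) (iinv_gtrans nHH) //; exact: G_Hinv.
- by move=> es Ees fs j e e' Dfs; rewrite ltn0.
- by move=> es Ees fs j c Dfs; rewrite ltn0.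
Qed.

Lemma InvS m : (m < s)%N -> InvA m -> InvB m -> InvC1 m -> InvC2 m ->
  [/\ InvA m.+1, InvB m.+1, InvC1 m.+1 & InvC2 m.+1].
Proof.
move=> lt hA hB hC1 hC2; pose i := Ordinal lt.
have vi : nat_of_ord i = m by [].
have nei : forall i' : 'I_s, (m < i')%N -> i' != i.
  by move=> i' li'; apply/negP => /eqP e; move: li'; rewrite e ltnn.
have nej : forall j : 'I_s, (j < m)%N -> j != i.
  by move=> j lj; apply/negP => /eqP e; move: lj; rewrite e ltnn.
have GF : forall (es : 'I_s -> Y -> ZG Q) x, Gm m (upd es i x) = Gm m es.
  move=> es x; apply/funext => fs; apply: Gm_F => j lj; rewrite upd_other //; exact: nej.
split.
- move=> es Ees fs i' f f' Dfs li' Df Df'; rewrite !(Gm_S lt) -/i.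
  have e : phiF i (Gm m es) (upd fs i' (f + f')) =
           phiF i (Gm m es) (upd fs i' f) + phiF i (Gm m es) (upd fs i' f').
    apply/funext => f0; rewrite fctD; case: (pselect (D f0)) => D0; last by rewrite !phiF_out // addr0.
    rewrite !phiFE // -iotaD !(upd_updC _ _ _ (nei _ li')).
    by rewrite hA //; [exact: Dupd' | exact: ltnW].
  rewrite e (ED (Ees i)) //; apply: phiF_Sv => //; exact: Dupd'.
- move=> es Ees fs i' g Dfs li'; rewrite !(Gm_S lt) -/i.
  have e : phiF i (Gm m es) (upd fs i' (dual_act g (fs i'))) = dual_act g (phiF i (Gm m es) fs).
    apply/funext => f0; rewrite dual_actE; case: (pselect (D f0)) => D0; last by rewrite !phiF_out // gtrans0.
    rewrite !phiFE // (upd_updC _ _ _ (nei _ li')).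
    have := hB es Ees (upd fs i f0) i' g (Dupd' i Dfs D0) (ltnW li').
    by rewrite upd_other ?nei // => ->; rewrite (iota_gtrans nHH).
  by rewrite e (Eact' abG (Ees i)) //; exact: phiF_Sv.
- move=> es Ees fs j e e' Dfs lj Ee Ee'; rewrite !(Gm_S lt) -/i.
  case: (eqVneq j i) => [->|nji].
    by rewrite !upd_same !GF fctD.
  have jm : (j < m)%N by move: lj; rewrite ltnS leq_eqVlt; case/orP => // /eqP e1; case/negP: nji; apply/eqP/val_inj.
  rewrite !upd_other ?(eq_sym i) //.
  have e1 : phiF i (Gm m (upd es j (e + e'))) fs =
            phiF i (Gm m (upd es j e)) fs + phiF i (Gm m (upd es j e')) fs.
    apply/funext => f0; rewrite fctD; case: (pselect (D f0)) => D0; last by rewrite !phiF_out // addr0.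
    by rewrite !phiFE // -iotaD hC1 //; exact: Dupd'.
  rewrite e1 (ED (Ees i)) //; apply: phiF_Sv => //; exact: Eupd.
- move=> es Ees fs j c Dfs lj; rewrite !(Gm_S lt) -/i.
  case: (eqVneq j i) => [->|nji].
    by rewrite !upd_same !GF dual_actE.
  have jm : (j < m)%N by move: lj; rewrite ltnS leq_eqVlt; case/orP => // /eqP e1; case/negP: nji; apply/eqP/val_inj.
  rewrite !upd_other ?(eq_sym i) //.
  have e1 : phiF i (Gm m (upd es j (dual_act c (es j)))) fs = actY c (phiF i (Gm m es) fs).
    apply/funext => f0; rewrite /cqact dual_actE; case: (pselect (D f0)) => D0; last by rewrite !phiF_out // gtrans0.
    rewrite !phiFE // hC2 //; last exact: Dupd'.
    by rewrite -(iota_gtrans nHH) coset_reprK.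
  by rewrite e1 (Eact (Ees i)) //; exact: phiF_Sv.
Qed.

Lemma Inv_all m : (m <= s)%N -> [/\ InvA m, InvB m, InvC1 m & InvC2 m].
Proof.
elim: m => [|m IH] lm; first exact: Inv0.
have [hA hB hC1 hC2] := IH (ltnW lm).
exact: InvS.
Qed.

Lemma Gm_til m (fs : 'I_s -> X -> ZG gT) : Dall fs -> (m <= s)%N ->
  Gm m (fun i => til (fs i)) fs = iinv H (G fs).
Proof.
move=> Dfs; elim: m => [|m IH] lm //.
rewrite (Gm_S lm) tildeE; last first.
  have [hA hB _ _] := Inv_all (ltnW lm).
  apply: phiF_Sv => //; move=> k; apply: tilde_E => //; exact: Dfs.
by rewrite phiFE ?upd_id ?iotaK ?IH ?(ltnW lm).
Qed.


Definition Fc (es : 'I_s -> Y -> ZG Q) : ZG Q :=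
  if `[< Eall es >] then Gm s es (fun _ => 0) else 0.

Lemma Dall0 : Dall (fun _ : 'I_s => (0 : X -> ZG gT)).
Proof. by move=> k; exact: D0. Qed.

Lemma Fc_add : multiadd actY Sv Fc.
Proof.
move=> es i e e' Ees Ee Ee'; have [_ _ hC1 _] := Inv_all (leqnn s).
rewrite /Fc !asboolT; try by apply: Eupd => //; apply: EplusD.
by rewrite hC1 //; exact: Dall0.
Qed.

Lemma Fc_SX : SX Fc.
Proof.
have [_ _ _ hC2] := Inv_all (leqnn s).
split; first exact: Fc_add.
split; [|split].
- move=> es i c Ees; rewrite /Fc !asboolT //; last by apply: Eupd => //; apply: (Edual_act abG).
  by rewrite hC2 //; exact: Dall0.
- move=> es i j Ees ij eij.
  pose ks k := (kfc abG hg (es k)).1; pose fsc k := (kfc abG hg (es k)).2.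
  have Dfsc : Dall fsc by move=> k; case: (kfcP abG hg (Ees k)).
  have e1 : (fun k => es k *+ ks k) = (fun k => til (fsc k)).
    by apply/funext => k; case: (kfcP abG hg (Ees k)).
  have K0 : (0 < \prod_k ks k)%N by rewrite prodn_gt0 // => k; case: (kfcP abG hg (Ees k)).
  apply: (ZG_mul0n K0); rewrite -(multiadd_scale Fc_add) // e1 /Fc asboolT; last first.
    move=> k; apply: tilde_E => //; exact: Dfsc.
  rewrite (@Gm_Dd s _ _ fsc); last by move=> k; rewrite leqNgt ltn_ord.
  rewrite Gm_til // (eb_alt (proj1 SG) Dfsc ij) ?iinv0 //.
  by rewrite /fsc eij.
- by move=> es nE; rewrite /Fc asboolF.
Qed.

Lemma Phi_Fc : Phi act Fc = G.
Proof.
apply/funext => fs; case: (pselect (Dall fs)) => Dfs; last first.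
  by rewrite Phi_out // (eb_out (proj1 SG)).
rewrite PhiE // /Fc asboolT; last exact: (tilE H abG Dfs).
rewrite (@Gm_Dd s _ _ fs); last by move=> k; rewrite leqNgt ltn_ord.
by rewrite Gm_til // (iinvK nHH) //; exact: G_Hinv.
Qed.

End SurjSec.

Section XiSec.
Variables (gT : finGroupType) (X : zmodType) (act : gT -> X -> X) (H : {group gT}) (s : nat).
Hypotheses (abG : abelian [set: gT])
  (actD : forall g x y, act g (x + y) = act g x + act g y)
  (actM : forall g h x, act (g * h)%g x = act g (act h x)).

Local Notation Q := (coset_of H).
Local Notation D := (@dual gT X act (fun _ => True)).
Local Notation Y := ((X -> ZG gT) -> ZG gT).
Local Notation Sv := (invar (@dual_act gT (X -> ZG gT)) (bidual_set act) H).
Local Notation actY := (@cqact gT H _ (@dual_act gT (X -> ZG gT))).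
Local Notation nHH := (nH H abG).
Local Notation til := (tilde act H).

Lemma act0 g : act g 0 = 0.
Proof. by have := actD g 0 0; rewrite addr0 => e; apply: (@addrI _ (act g 0)); rewrite -e addr0. Qed.

Lemma normH_inv a h : h \in H -> act h (normH act H a) = normH act H a.
Proof.
move=> hH; rewrite /normH (big_morph _ (actD h) (act0 h)).
under eq_bigr => h' _ do rewrite -actM.
rewrite [RHS](reindex_inj (mulgI h)) /=; apply: eq_bigl => x.
by rewrite groupMl.
Qed.

Lemma evb_Sv a : Sv (evb act (normH act H a)).
Proof.
split; last first.
  move=> h hH; apply/funext => f; rewrite dual_actE /evb.
  case: (pselect (D f)) => Df; last by rewrite asboolF // gtrans0.
  by rewrite asboolT // -(Dact Df) normH_inv.
split; [split|].
- move=> f f' Df Df'; rewrite /evb !asboolT //; exact: DplusD.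
- move=> g f Df; rewrite /evb !asboolT //; exact: (Ddual_act abG).
- by move=> f nDf; rewrite /evb asboolF.
Qed.

Lemma normH_eval f a : D f -> f (normH act H a) = gmul (NHel H) (f a).
Proof.
move=> Df; rewrite /normH (DfS _ _ _ Df) gmul_sumr_gtrans.
by apply: eq_bigr => h _; rewrite (Dact Df).
Qed.

Lemma Phi_xi (a : 'I_s -> X) :
  Phi act (xi actY Sv (fun i => evb act (normH act H (a i))))
  = (fun fs => gmul (NHel H) (xi act (fun _ => True) a fs)).
Proof.
apply/funext => fs; case: (pselect (forall k, D (fs k))) => Dfs; last first.
  by rewrite Phi_out // /xi asboolF // gmul0r.
rewrite PhiE // /xi !asboolT //; last exact: (tilE H abG Dfs).
have -> : (fun i j => til (fs i) (evb act (normH act H (a j)))) =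
          (fun i j => pi H (fs i (a j))).
  apply/funext => i; apply/funext => j.
  rewrite tildeE; last exact: evb_Sv.
  by rewrite /evb asboolT ?normH_eval // -(iota_pi nHH) iotaK.
by rewrite -(pi_gdet nHH) (iota_pi nHH).
Qed.

End XiSec.

Unset Implicit Arguments.
Theorem mainTheorem7 (gT : finGroupType) (X : zmodType) (act : gT -> X -> X)
  (H : {group gT}) (s : nat) :
  abelian [set: gT] ->
  (forall g x y, act g (x + y) = act g x + act g y) ->
  (forall x, act 1%g x = x) ->
  (forall g h x, act (g * h)%g x = act g (act h x)) ->
  fin_gen act ->
  exists Phi : (('I_s -> (((X -> ZG gT) -> ZG gT) -> ZG (coset_of H)))
                  -> ZG (coset_of H)) ->
               (('I_s -> (X -> ZG gT)) -> ZG gT),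
    ZGiso
      (@bid_act (coset_of H) ('I_s -> (((X -> ZG gT) -> ZG gT) -> ZG (coset_of H))))
      (ext_bidual (cqact (@dual_act gT (X -> ZG gT)))
                  (invar (@dual_act gT (X -> ZG gT)) (bidual_set act) H) s)
      (cqact (@bid_act gT ('I_s -> (X -> ZG gT))))
      (invar (@bid_act gT ('I_s -> (X -> ZG gT)))
             (ext_bidual act (fun _ => True) s) H)
      Phi
    /\
    (forall a : 'I_s -> X,
       Phi (xi (cqact (@dual_act gT (X -> ZG gT)))
               (invar (@dual_act gT (X -> ZG gT)) (bidual_set act) H)
               (fun i => evb act (normH act H (a i))))
       = (fun fs => gmul (NHel H) (xi act (fun _ => True) a fs))).
Proof.
move=> abG actD act1 actM [gens hg].
exists (@Phi gT X act H s); split; last by move=> a; exact: Phi_xi.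
split; [|split; [|split; [|split]]].
- by move=> F SF; exact: Phi_SY.
- by move=> F F' _ _; exact: PhiD.
- by move=> c F _; exact: Phi_act.
- by move=> F F' SF SF' e; exact: (Phi_inj abG hg SF SF' e).
- move=> G SG; exists (@Fc _ _ act H s G); first exact: (Fc_SX abG hg SG).
  exact: Phi_Fc.
Qed.
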